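(* Let $G$ be a second countable, locally compact, Hausdorff groupoid with a Haar system, let $q\colon G^{(0)}\to G\backslash G^{(0)}$ be the orbit map, and define $G^{(0)}_{\le n}=\{u:|[u]|\le n\}$, $G^{(0)}_{\ge n}=\{u:|[u]|\ge n\}$, $G^{(0)}_n=\{u:|[u]|=n\}$. Then: (a) for $n\ge0$, $G^{(0)}_{\le n}$ is a closed invariant subset of $G^{(0)}$; (b) for $n\ge0$, $G^{(0)}_{\ge n}$ is an open invariant subset of $G^{(0)}$; (c) for $n\ge1$, $G^{(0)}_n$ is invariant and locally closed, hence locally compact; (d) for $n\ge1$, $q(G^{(0)}_n)$ is locally closed in $G\backslash G^{(0)}$ and is Hausdorff in the relative topology.
   Context: $G$ acts on $G^{(0)}$ by $\gamma\cdot s(\gamma)=r(\gamma)$; $[u]=r(s^{-1}(u))$ is the orbit of $u$ and $|[u]|$ its cardinality. $G\backslash G^{(0)}$ is the orbit space with the quotient topology. A subset $F$ is invariant if $F=r(s^{-1}(F))$. *)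

(* Defs.v *)
From HB Require Import structures.
From mathcomp Require Import all_boot all_order all_algebra.
From mathcomp Require Import all_classical all_reals all_analysis.
Set Implicit Arguments. Unset Strict Implicit. Unset Printing Implicit Defensive.
Import Order.TTheory GRing.Theory Num.Theory.
Import numFieldNormedType.Exports.
Local Open Scope classical_set_scope.
Local Open Scope ring_scope.
Local Open Scope card_scope.

Section Groupoids.
Variable G : ptopologicalType.

(* The groupoid is the type G; its unit space G^(0) is the subset G0 of G;   *)
(* r, s are range and source; mul x y is the product xy, meaningful when     *)
(* s x = r y (outside composable pairs its value is irrelevant); inv is the  *)
(* inverse.                                                                  *)
Definition composable (s r : G -> G) : set (G * G) :=
  [set p | s p.1 = r p.2].

Definition is_groupoid (G0 : set G) (r s : G -> G) (mul : G -> G -> G)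
    (inv : G -> G) : Prop :=
  [/\ (forall x, G0 (r x) /\ G0 (s x)),
      (forall u, G0 u -> r u = u /\ s u = u),
      (forall x y, s x = r y -> r (mul x y) = r x /\ s (mul x y) = s y),
      (forall x y z, s x = r y -> s y = r z ->
          mul (mul x y) z = mul x (mul y z)) &
      ((forall x, mul (r x) x = x /\ mul x (s x) = x) /\
      (forall x, [/\ r (inv x) = s x, s (inv x) = r x,
                   mul x (inv x) = r x & mul (inv x) x = s x]))].

Definition is_topological_groupoid (G0 : set G) (r s : G -> G)
    (mul : G -> G -> G) (inv : G -> G) : Prop :=
  [/\ is_groupoid G0 r s mul inv,
      {within composable s r, continuous (fun p : G * G => mul p.1 p.2)} &
      continuous inv].

Definition locally_compact_space : Prop :=
  forall x : G, exists K : set G, compact K /\ nbhs x K.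

Definition rel_open (Y A : set G) : Prop :=
  A `<=` Y /\ exists O : set G, open O /\ A = O `&` Y.
Definition rel_closed (Y A : set G) : Prop :=
  A `<=` Y /\ exists C : set G, closed C /\ A = C `&` Y.
Definition rel_locally_closed (Y A : set G) : Prop :=
  exists O C : set G, rel_open Y O /\ rel_closed Y C /\ A = O `&` C.

Definition rel_locally_compact (A : set G) : Prop :=
  forall u, A u -> exists K : set G,
    [/\ compact K, K `<=` A &
        exists W : set G, [/\ open W, W u & W `&` A `<=` K]].

Definition g_orbit (r s : G -> G) (u : G) : set G := r @` (s @^-1` [set u]).

Definition g_invariant (r s : G -> G) (F : set G) : Prop :=
  F = r @` (s @^-1` F).

Definition units_le (G0 : set G) (r s : G -> G) (n : nat) : set G :=
  [set u | G0 u /\ g_orbit r s u #<= `I_n].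
Definition units_ge (G0 : set G) (r s : G -> G) (n : nat) : set G :=
  [set u | G0 u /\ `I_n #<= g_orbit r s u].
Definition units_eq (G0 : set G) (r s : G -> G) (n : nat) : set G :=
  [set u | G0 u /\ g_orbit r s u #= `I_n].

(* A point of the g_orbit space is represented by the g_orbit itself (a subset   *)
(* of G); the g_orbit map is q u = [u].  A set V of orbits is open iff        *)
(* q^{-1}(V) is open in G^(0).                                               *)
Definition orbit_space (G0 : set G) (r s : G -> G) : set (set G) :=
  g_orbit r s @` G0.

Definition q_open (G0 : set G) (r s : G -> G) (V : set (set G)) : Prop :=
  V `<=` orbit_space G0 r s /\
  rel_open G0 (G0 `&` (g_orbit r s @^-1` V)).

Definition q_closed (G0 : set G) (r s : G -> G) (V : set (set G)) : Prop :=
  V `<=` orbit_space G0 r s /\ q_open G0 r s (orbit_space G0 r s `\` V).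

Definition q_locally_closed (G0 : set G) (r s : G -> G) (V : set (set G))
  : Prop :=
  exists O C, q_open G0 r s O /\ q_closed G0 r s C /\ V = O `&` C.

Definition q_rel_hausdorff (G0 : set G) (r s : G -> G) (V : set (set G))
  : Prop :=
  forall a b, V a -> V b -> a <> b ->
    exists O1 O2, [/\ q_open G0 r s O1, q_open G0 r s O2, O1 a, O2 b &
                      O1 `&` O2 `&` V = set0].

Local Notation borelG := (g_sigma_algebraType (@open G)).

Definition compactly_supported {R : realType} (f : G -> R) : Prop :=
  exists K : set G, compact K /\ forall x, ~ K x -> f x = 0.

(* {lam u}_{u in G0}: positive Radon measures on G (finite on compact sets; *)
(* on a second countable LCH space these are automatically regular), with   *)
(* supp lam^u = G^u, continuity of u |-> int f dlam^u for f in C_c(G), and  *)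
(* left invariance int f(xy) dlam^{s(x)}(y) = int f(y) dlam^{r(x)}(y).      *)
Definition is_haar_system {R : realType} (G0 : set G) (r s : G -> G)
    (mul : G -> G -> G) (lam : G -> {measure set borelG -> \bar R}) : Prop :=
  [/\ (forall u, G0 u -> forall K : set G, compact K ->
          (lam u (K : set borelG) < +oo)%E),
      (forall u, G0 u -> forall x : G,
          r x = u <-> (forall U : set G, open U -> U x ->
                         (0 < lam u (U : set borelG))%E)),
      (forall f : G -> R, continuous f -> compactly_supported f ->
          {within G0, continuous
             (fun u => (\int[lam u]_(x in [set: borelG]) (f x)%:E)%E)}) &
      (forall f : G -> R, continuous f -> compactly_supported f ->
         forall x : G,
          (\int[lam (s x)]_(y in [set: borelG]) (f (mul x y))%:E)%E =
          (\int[lam (r x)]_(y in [set: borelG]) (f y)%:E)%E)].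

End Groupoids.

(* Main.v *)
Require Import Defs.
From HB Require Import structures.
From mathcomp Require Import all_boot all_order all_algebra.
From mathcomp Require Import all_classical all_reals all_analysis.
From mathcomp Require Import measurable_realfun.
Import Order.TTheory GRing.Theory Num.Theory.
Set Implicit Arguments. Unset Strict Implicit. Unset Printing Implicit Defensive.
Import numFieldNormedType.Exports.
Local Open Scope classical_set_scope.
Local Open Scope ring_scope.
Local Open Scope card_scope.

Lemma grpG0 (G : ptopologicalType) (G0 : set G) r s mul inv :
  is_groupoid G0 r s mul inv -> forall x, G0 x <-> r x = x.
Proof.
case=> H1 H2 _ _ _ x; split; first by move/H2=> [].
by move=> <-; case: (H1 x).
Qed.
Lemma orbit_rs (G : ptopologicalType) (G0 : set G) r s mul inv :
  is_groupoid G0 r s mul inv -> forall g, g_orbit r s (r g) = g_orbit r s (s g).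
Proof.
case=> H1 H2 H3 H4 [H5 H6] g; apply/seteqP; split => z [d /= Hd <-].
- have [Hr Hs] := H3 d g Hd.
  by exists (mul d g) => //=; rewrite Hs.
- have [Ir Is Im1 Im2] := H6 g.
  have c : s d = r (inv g) by rewrite Ir.
  have [Hr Hs] := H3 _ _ c.
  by exists (mul d (inv g)) => //=; rewrite Hs Is.
Qed.
Lemma orbit_self (G : ptopologicalType) (G0 : set G) r s mul inv :
  is_groupoid G0 r s mul inv -> forall u, G0 u -> g_orbit r s u u.
Proof. case=> H1 H2 _ _ _ u /H2 [Hr Hs]; by exists u. Qed.
Lemma orbit_eq (G : ptopologicalType) (G0 : set G) r s mul inv :
  is_groupoid G0 r s mul inv -> forall u v, g_orbit r s u v ->
  g_orbit r s v = g_orbit r s u.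
Proof.
move=> Hg u v [g /= Hs <-]; rewrite -Hs; exact: (orbit_rs Hg g).
Qed.
Lemma orbit_G0 (G : ptopologicalType) (G0 : set G) r s mul inv :
  is_groupoid G0 r s mul inv -> forall u v, g_orbit r s u v -> G0 v.
Proof. by case=> H1 _ _ _ _ u v [g _ <-]; case: (H1 g). Qed.
Lemma inv_inv (G : ptopologicalType) (G0 : set G) r s mul inv :
  is_groupoid G0 r s mul inv -> forall x, inv (inv x) = x.
Proof.
case=> H1 H2 H3 H4 [H5 H6] x.
have [Ir Is Im1 Im2] := H6 x.
have [Ir' Is' Im1' Im2'] := H6 (inv x).
have e1 : inv (inv x) = mul (inv (inv x)) (mul (inv x) x).
  by rewrite Im2 -Ir -Is'; case: (H5 (inv (inv x))) => _ ->.
rewrite e1 -H4 ?Is' ?Is //.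
by rewrite Im2' Is; case: (H5 x).
Qed.
Lemma invariantP (G : ptopologicalType) (G0 : set G) r s mul inv (P : set G -> Prop) :
  is_groupoid G0 r s mul inv ->
  g_invariant r s [set u | G0 u /\ P (g_orbit r s u)].
Proof.
move=> Hg; have [H1 H2 _ _ _] := Hg.
rewrite /g_invariant; apply/seteqP; split => u.
- move=> [G0u Pu]; have [Hr Hs] := H2 u G0u.
  by exists u => //=; rewrite Hs.
- move=> [g /= [G0s Ps] <-]; split; first by case: (H1 g).
  by rewrite (orbit_rs Hg).
Qed.
Lemma r_cont (G : ptopologicalType) (G0 : set G) r s mul inv :
  is_topological_groupoid G0 r s mul inv -> continuous r.
Proof.
case=> Hg Hm Hi.
have [H1 H2 H3 H4 [H5 H6]] := Hg.
have -> : r = (fun y => mul y (inv y)).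
  by apply: funext => y; case: (H6 y).
move=> x W /=.
rewrite nbhs_simpl.
have hc : (fun y => (y, inv y)) @ x --> (x, inv x).
  by apply: cvg_pair => //; exact: Hi.
have Ax : composable s r (x, inv x) by rewrite /composable /=; case: (H6 x).
move/subspace_continuousP: Hm => /(_ _ Ax) Hm W0.
have := Hm _ W0.
rewrite /= nbhs_simpl /within => /hc /=.
move=> H; apply: (@filterS _ (nbhs x) _ _ _ _ H) => y /= Hy; apply: Hy.
by rewrite /composable /=; case: (H6 y).
Qed.
Lemma s_cont (G : ptopologicalType) (G0 : set G) r s mul inv :
  is_topological_groupoid G0 r s mul inv -> continuous s.
Proof.
move=> Ht; have [Hg Hm Hi] := Ht.
have [H1 H2 H3 H4 [H5 H6]] := Hg.
have -> : s = r \o inv by apply: funext => y /=; case: (H6 y).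
move=> x; apply: continuous_comp; [exact: Hi | exact: (r_cont Ht)].
Qed.
Lemma hsep (G : ptopologicalType) : hausdorff_space G -> forall x y : G, x <> y ->
  exists A B : set G, [/\ open A, open B, A x, B y & A `&` B = set0].
Proof.
rewrite open_hausdorff => H x y /eqP /H [[A B] /= [xA yB] [oA oB /eqP AB]].
by exists A, B; split => //; rewrite -inE.
Qed.
Lemma G0_closed (G : ptopologicalType) (G0 : set G) r s mul inv :
  is_topological_groupoid G0 r s mul inv -> hausdorff_space G -> closed G0.
Proof.
move=> Ht Hh; have [Hg _ _] := Ht.
have -> : G0 = [set x | r x = x].
  by apply/seteqP; split => x /=; move/(grpG0 Hg x).
rewrite -[X in closed X]setCK; apply: open_closedC.
rewrite openE => x /= rx.
have [A [B [oA oB Ar Bx AB]]] := hsep Hh rx.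
have nA : nbhs x (r @^-1` A).
  by apply: (r_cont Ht); apply: open_nbhs_nbhs.
have nB : nbhs x B by apply: open_nbhs_nbhs.
rewrite /interior; apply: filterS (filterI nA nB) => y [/= Ay By] ry.
have : (A `&` B) y by split => //; rewrite -ry.
by rewrite AB.
Qed.
Lemma opc_sep_none (G : ptopologicalType) :
  locally_compact_space G -> hausdorff_space G -> forall a : G,
  exists A B : set (one_point_compactification G),
    [/\ nbhs (Some a : one_point_compactification G) A, nbhs (None : one_point_compactification G) B & A `&` B = set0].
Proof.
move=> Hlc Hh a; have [K [cK nK]] := Hlc a.
exists (Some @` K), (Some @` (~` K) `|` [set None]); split.
- exact: one_point_compactification_some_nbhs.
- exists K => //; split => //; exact: compact_closed.
- apply/seteqP; split => // z [[k Kk <-]] [[k' nKk' [e]]|//].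
  by apply: nKk'; rewrite e.
Qed.
Lemma opc_hausdorff (G : ptopologicalType) :
  locally_compact_space G -> hausdorff_space G ->
  hausdorff_space (one_point_compactification G).
Proof.
move=> Hlc Hh p q cl; apply: contrapT => pq.
suff [A [B [nA nB AB]]] : exists A B : set (one_point_compactification G),
   [/\ nbhs p A, nbhs q B & A `&` B = set0].
  by have := cl A B nA nB; rewrite AB => -[x []].
case: p q cl pq => [a|] [b|] cl pq.
- have ab : a <> b by move=> e; apply: pq; rewrite e.
  have [A [B [oA oB Aa Bb AB]]] := hsep Hh ab.
  exists (Some @` A), (Some @` B); split.
  + by apply: one_point_compactification_some_nbhs; exact: open_nbhs_nbhs.
  + by apply: one_point_compactification_some_nbhs; exact: open_nbhs_nbhs.
  + apply/seteqP; split => // z [[a1 Aa1 <-]] [b1 Bb1 [e]].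
    have : (A `&` B) a1 by split => //; move: Bb1; rewrite e.
    by rewrite AB.
- have [A [B [nA nB AB]]] := opc_sep_none Hlc Hh a.
  by exists A, B.
- have [A [B [nA nB AB]]] := opc_sep_none Hlc Hh b.
  by exists B, A; rewrite setIC.
- by exfalso; apply: pq.
Qed.
Lemma bump_fun (R : realType) (G : ptopologicalType) :
  locally_compact_space G -> hausdorff_space G -> forall (x : G) (U : set G),
  open U -> U x ->
  exists f : G -> R, [/\ continuous f, compactly_supported f,
     (forall y, 0 <= f y), f x = 1 & (forall y, f y != 0 -> U y)].
Proof.
move=> Hlc Hh x U oU Ux.
have [K [cK nK]] := Hlc x.
pose W := K° `&` U.
have oW : open W by apply: openI => //; exact: open_interior.
have Wx : W x by split.
pose O := one_point_compactification G.
have hO : hausdorff_space O by exact: opc_hausdorff.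
have nO : normal_space O.
  exact: compact_normal hO one_point_compactification_compact.
pose A : set O := ~` (Some @` W).
pose B : set O := [set Some x].
have cA : closed A.
  by apply: open_closedC; exact: one_point_compactification_open_some.
have cB : closed B by exact: (@accessible_closed_set1 O (hausdorff_accessible hO) (Some x)).
have AB : A `&` B = set0.
  apply/seteqP; split; last exact: sub0set.
  by move=> z [Az Bz]; rewrite /B /= in Bz; subst z; apply: Az; exists x.
have us := (@normal_separatorP R O).1 nO A B cA cB AB.
have [g [cg g01 gA gB]] := (@uniform_separatorP O R A B).1 us.
have gA0 : forall y, A (Some y) -> g (Some y) = 0.
  by move=> y Ay; apply: gA; exists (Some y).
exists (g \o Some); split.
- move=> y; apply: continuous_comp; last exact: cg.
  exact: one_point_compactification_some_continuous.
- exists K; split => // y nKy /=; apply: gA0 => -[w [Kw _] [e]].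
  by apply: nKy; rewrite -e; exact: interior_subset.
- move=> y /=; have : `[0, 1]%classic (g (Some y)) by apply: g01; exists (Some y).
  by rewrite /= in_itv /= => /andP[].
- by apply: gB; exists (Some x).
- move=> y /= gy; have : ~ A (Some y) by move=> /gA0; apply/eqP.
  rewrite /A /= => /contrapT [w [_ Uw] [e]]; by rewrite -e.
Qed.
Lemma open_meas (G : ptopologicalType) (U : set G) : open U ->
  measurable (U : set (g_sigma_algebraType (@open G))).
Proof. by move=> oU; apply: sub_sigma_algebra. Qed.
Lemma null_cover (R : realType) (G : ptopologicalType)
  (mu : {measure set (g_sigma_algebraType (@open G)) -> \bar R}) (S : set G) :
  @second_countable G ->
  (forall y, S y -> exists N : set G, [/\ open N, N y & mu N = 0%E]) ->
  mu.-negligible (S : set (g_sigma_algebraType (@open G))).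
Proof.
move=> [B cB [Bo Bb]] HS.
pose B0 := [set b | B b /\ mu.-negligible (b : set (g_sigma_algebraType (@open G)))].
have cB0 : countable B0.
  by apply: sub_countable cB; apply: subset_card_le => b [].
have [h hinj] := countable_injP _ cB0.
pose F k := \bigcup_(b in [set b | B0 b /\ h b = k]) (b : set (g_sigma_algebraType (@open G))).
have Fn : forall k, mu.-negligible (F k).
  move=> k; have [[b0 [B0b0 hb0]]|nob] := pselect (exists b, B0 b /\ h b = k).
    apply: negligibleS (B0b0.2) => y [b [B0b hb] bb].
    have -> : b0 = b by apply: hinj; rewrite ?inE // hb0 hb.
    exact: bb.
  suff -> : F k = set0 by exact: negligible_set0.
  by apply/seteqP; split => // y [b Hb _]; apply: nob; exists b.
apply: negligibleS (negligible_bigcup Fn) => y Sy.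
have [N [oN Ny N0]] := HS y Sy.
have nN : nbhs y N by exact: open_nbhs_nbhs.
have [b [Bb0 byy] bN] := Bb y N nN.
exists (h b) => //; exists b => //; split => //; split => //.
by exists N; split => //; exact: open_meas.
Qed.
Lemma cont_meas (R : realType) (G : ptopologicalType) (f : G -> R) :
  continuous f ->
  measurable_fun (setT : set (g_sigma_algebraType (@open G))) (EFin \o f : g_sigma_algebraType (@open G) -> \bar R).
Proof.
move=> cf; apply/measurable_EFinP.
apply: (measurability _ (RGenOpens.measurableE R)).
move=> _ [_ [a [b ->] <-]]; rewrite setTI; apply: open_meas.
by move/continuousP: cf; apply; exact: interval_open.
Qed.
Lemma r_open_at (R : realType) (G : ptopologicalType) (G0 : set G)
    (r s : G -> G) (mul : G -> G -> G) (inv : G -> G)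
    (lam : G -> {measure set (g_sigma_algebraType (@open G)) -> \bar R})
    (Hgrp : is_topological_groupoid G0 r s mul inv)
    (Hsc : @second_countable G) (Hlc : locally_compact_space G)
    (Hhd : @hausdorff_space G)
    (Hhaar : is_haar_system G0 r s mul lam) :
  forall (x : G) (U : set G), open U -> U x ->
  exists W : set G, [/\ open W, W (r x) &
     forall u, G0 u -> W u -> exists y, U y /\ r y = u].
Proof.
move=> x U oU Ux.
have [[H1 H2 H3 H4 [H5 H6]] _ _] := Hgrp.
have [Hfin Hsupp Hcont _] := Hhaar.
have [f [cf csf f0 fx fU]] := bump_fun R Hlc Hhd oU Ux.
have mf := cont_meas cf.
pose F u := (\int[lam u]_(y in [set: g_sigma_algebraType (@open G)]) (f y)%:E)%E.
have G0rx : G0 (r x) by case: (H1 x).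
have Fpos : (0 < F (r x))%E.
  pose V := f @^-1` [set z | 2^-1 < z].
  have oV : open V by move/continuousP: cf; apply; exact: open_gt.
  have Vx : V x by rewrite /V /= fx invf_lt1 // ltr1n.
  have mV := open_meas oV.
  have lV : (0 < lam (r x) V)%E by apply: ((Hsupp _ G0rx x).1 erefl).
  apply: (@lt_le_trans _ _ (\int[lam (r x)]_(y in V) (f y)%:E)%E); last first.
    apply: ge0_subset_integral => //; first by move=> y _; rewrite lee_fin.
  apply: (@lt_le_trans _ _ (\int[lam (r x)]_(y in V) (cst (2^-1)%:E y))%E).
    by rewrite integral_cst // mule_gt0 // lte_fin invr_gt0.
  apply: ge0_le_integral => //.
  - by move=> y _; rewrite /= lee_fin invr_ge0.
  - exact: measurable_funTS mf.
  - by move=> y; rewrite /V /= lee_fin => /ltW.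
have Hc := Hcont f cf csf.
move/subspace_continuousP: Hc => /(_ _ G0rx) Hc.
have nP : nbhs (F (r x)) [set z | 0 < z]%E.
  by apply: open_nbhs_nbhs; split; [exact: open_ereal_gt_ereal | exact: Fpos].
have := Hc _ nP.
rewrite /= nbhs_simpl /within /= nbhsE => -[W [oW Wrx] WP].
exists W; split => // u G0u Wu.
have Fu : (0 < F u)%E by exact: WP u Wu G0u.
apply: contrapT => noy.
have neg : (lam u).-negligible ([set y | f y != 0] : set (g_sigma_algebraType (@open G))).
  apply: null_cover Hsc _ => y fy.
  have nr : r y <> u by move=> e; apply: noy; exists y; split => //; exact: fU.
  have : ~ (forall N : set G, open N -> N y -> (0%R < lam u N)%E).
    by move=> H; apply: nr; apply/(Hsupp u G0u y).
  move=> /existsNP [N /not_implyP [oN /not_implyP [Ny nlt]]].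
  exists N; split => //.
  apply/eqP; rewrite eq_le measure_ge0 andbT leNgt; exact/negP.
have F0 : F u = 0%E.
  rewrite /F (@ae_eq_integral _ _ _ (lam u) _ (cst 0%E)) //; last first.
    apply: negligibleS neg => y /= H; apply/negP => /eqP fy.
    by apply: H => _; rewrite fy.
  exact: integral0.
by move: Fu; rewrite F0 ltxx.
Qed.
Lemma leIn (T : pointedType) (A : set T) n : `I_n #<= A <->
  exists g : nat -> T, {in `I_n &, injective g} /\ (forall k, (k < n)%N -> A (g k)).
Proof.
split.
  by move/pcard_leP => /injfunPex [f ff fi]; exists f; split => // k kn; exact: ff.
move=> [g [gi gA]]; apply/pcard_leP; apply/injfunPex; exists g => //.
Qed.
Lemma notle (T : pointedType) (A : set T) n : A #<= `I_n <-> ~ (`I_n.+1 #<= A).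
Proof.
split.
  move=> AI IA; have := card_le_trans IA AI.
  by rewrite card_le_II ltnn.
move=> nIA; have [[m eqA]|inf] := pselect (finite_set A).
  have [mn|nm] := leqP m n.
    by rewrite (card_le_eql eqA) card_le_II.
  exfalso; apply: nIA; rewrite (card_le_eqr eqA) card_le_II; exact: nm.
exfalso; apply: nIA; move/infiniteP: inf => inf.
exact: card_le_trans (subset_card_le (subsetT _)) inf.
Qed.
Lemma fill (T : pointedType) (A U : set T) n (g : nat -> T) :
  A #<= `I_n -> {in `I_n &, injective g} ->
  (forall k, (k < n)%N -> A (g k) /\ U (g k)) -> A `<=` U.
Proof.
move=> AI gi gAU a Aa; apply: contrapT => nUa.
move/notle: AI; apply; apply/leIn.
exists (fun k => if k == n then a else g k); split.
  move=> i j; rewrite !inE /= !ltnS => ilen jlen.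
  case: eqP => [-> | /eqP inn]; case: eqP => [-> // | /eqP jnn].
  - by move=> e; exfalso; apply: nUa; rewrite e; apply: (gAU j _).2; rewrite ltn_neqAle jnn.
  - by move=> e; exfalso; apply: nUa; rewrite -e; apply: (gAU i _).2; rewrite ltn_neqAle inn.
  - by move=> e; apply: gi => //; rewrite inE /= ltn_neqAle ?inn ?jnn.
move=> k; rewrite ltnS; case: eqP => // /eqP knn kn.
by apply: (gAU k _).1; rewrite ltn_neqAle knn.
Qed.
Lemma nbhs_finI (T : topologicalType) (x : T) (m : nat) (F : nat -> set T) :
  (forall j, (j < m)%N -> nbhs x (F j)) ->
  nbhs x [set y | forall j, (j < m)%N -> F j y].
Proof.
elim: m => [|m IH] H.
  have -> : [set y | forall j, (j < 0)%N -> F j y] = setT.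
    by apply/seteqP; split => // y _ j.
  exact: filterT.
have := filterI (IH (fun j jm => H j (ltnW jm))) (H m (ltnSn m)).
move=> HI.
have sub : [set y | forall j, (j < m)%N -> F j y] `&` F m `<=`
    [set y | forall j, (j < m.+1)%N -> F j y].
  move=> y [H1 H2] j; rewrite ltnS leq_eqVlt => /orP [/eqP -> //|].
  exact: H1.
exact: (filterS sub (HI (nbhs_filter x))).
Qed.
Lemma rel_open_local (G : ptopologicalType) (G0 A : set G) : A `<=` G0 ->
  (forall u, A u -> exists W, [/\ open W, W u & W `&` G0 `<=` A]) ->
  rel_open G0 A.
Proof.
move=> AG H; split => //.
exists (\bigcup_(W in [set W | open W /\ W `&` G0 `<=` A]) W); split.
  by apply: bigcup_open => W [].
apply/seteqP; split.
  move=> u Au; have [W [oW Wu WA]] := H u Au.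
  by split; [exists W | exact: AG].
by move=> u [[W [_ WA] Wu] G0u]; exact: WA.
Qed.
Lemma pair_sep (G : ptopologicalType) : hausdorff_space G ->
  exists sep : G -> G -> set G * set G, forall x y, x <> y ->
    [/\ open (sep x y).1, open (sep x y).2, (sep x y).1 x, (sep x y).2 y &
        (sep x y).1 `&` (sep x y).2 = set0].
Proof.
move=> Hh.
have : forall p : G * G, exists AB : set G * set G, p.1 <> p.2 ->
    [/\ open AB.1, open AB.2, AB.1 p.1, AB.2 p.2 & AB.1 `&` AB.2 = set0].
  move=> [x y]; have [xy|xy] := pselect (x = y).
    by exists (set0, set0) => /=.
  have [A [B [oA oB Ax By AB]]] := hsep Hh xy.
  by exists (A, B).
move=> /choice [f Hf]; exists (fun x y => f (x, y)) => x y xy.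
exact: (Hf (x, y)).
Qed.
Lemma s_open_at (R : realType) (G : ptopologicalType) (G0 : set G)
    (r s : G -> G) (mul : G -> G -> G) (inv : G -> G)
    (lam : G -> {measure set (g_sigma_algebraType (@open G)) -> \bar R})
    (Hgrp : is_topological_groupoid G0 r s mul inv)
    (Hsc : @second_countable G) (Hlc : locally_compact_space G)
    (Hhd : @hausdorff_space G)
    (Hhaar : is_haar_system G0 r s mul lam) :
  forall (x : G) (U : set G), open U -> U x ->
  exists W : set G, [/\ open W, W (s x) &
     forall u, G0 u -> W u -> exists y, U y /\ s y = u].
Proof.
move=> x U oU Ux.
have [Hg _ Hi] := Hgrp.
have [H1 H2 H3 H4 [H5 H6]] := Hg.
have oU' : open (inv @^-1` U) by move/continuousP: Hi; apply.
have U'x : (inv @^-1` U) (inv x) by rewrite /= (inv_inv Hg).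
have [W [oW Wrx HW]] := r_open_at Hgrp Hsc Hlc Hhd Hhaar oU' U'x.
exists W; split => //; first by case: (H6 x) => <-.
move=> u G0u Wu; have [y [Uy ry]] := HW u G0u Wu.
by exists (inv y); split => //; case: (H6 y) => _ -> _ _.
Qed.
Lemma spread (R : realType) (G : ptopologicalType) (G0 : set G)
    (r s : G -> G) (mul : G -> G -> G) (inv : G -> G)
    (lam : G -> {measure set (g_sigma_algebraType (@open G)) -> \bar R})
    (Hgrp : is_topological_groupoid G0 r s mul inv)
    (Hsc : @second_countable G) (Hlc : locally_compact_space G)
    (Hhd : @hausdorff_space G)
    (Hhaar : is_haar_system G0 r s mul lam) :
  forall (u : G) (n : nat) (g : nat -> G) (U : set G), open U ->
  {in `I_n &, injective g} ->
  (forall k, (k < n)%N -> g_orbit r s u (g k) /\ U (g k)) ->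
  exists W : set G, [/\ open W, W u &
    forall w, G0 w -> W w -> exists h : nat -> G, {in `I_n &, injective h} /\
      (forall k, (k < n)%N -> g_orbit r s w (h k) /\ U (h k))].
Proof.
move=> u n g U oU gi gU.
have [sep Hsep] := pair_sep Hhd.
pose S i j := if (i < j)%N then (sep (g i) (g j)).1 else (sep (g j) (g i)).2.
have gne : forall i j, (i < n)%N -> (j < n)%N -> i != j -> g i <> g j.
  move=> i j ilt jlt /eqP ij e; apply: ij; apply: gi => //; rewrite inE //.
have Sprop : forall i j, (i < n)%N -> (j < n)%N -> i != j ->
    [/\ open (S i j), S i j (g i) & S i j `&` S j i = set0].
  move=> i j ilt jlt ij; rewrite /S.
  have [lij|lji] := ltnP i j.
    rewrite ltnNge (ltnW lij) /=.
    by have [? ? ? ? ?] := Hsep _ _ (gne i j ilt jlt ij); split.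
  have lji' : (j < i)%N by rewrite ltn_neqAle eq_sym ij lji.
  have ji : j != i by rewrite eq_sym.
  rewrite lji'.
  have [? ? ? ? e] := Hsep _ _ (gne j i jlt ilt ji).
  by split => //; rewrite setIC.
pose V k := interior (U `&` [set y | forall j, (j < n)%N ->
                                       (if j == k then setT else S k j) y]).
have oV : forall k, open (V k) by move=> k; exact: open_interior.
have Vg : forall k, (k < n)%N -> V k (g k).
  move=> k kn; rewrite /V /interior /=.
  apply: filterI; first by apply: open_nbhs_nbhs; split => //; exact: (gU k kn).2.
  apply: nbhs_finI => j jn; case: eqP => [_|/eqP jk]; first exact: filterT.
  have kj : k != j by rewrite eq_sym.
  have [oS Sg _] := Sprop k j kn jn kj.
  by apply: open_nbhs_nbhs.
have HWk : forall k, exists Wk : set G, (k < n)%N -> [/\ open Wk, Wk u &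
    forall w, G0 w -> Wk w -> exists y, V k (r y) /\ s y = w].
  move=> k; have [kn|nk] := ltnP k n; last by exists setT.
  have [gam /= sg rg] := (gU k kn).1.
  have oVr : open (r @^-1` V k).
    by move/continuousP: (r_cont Hgrp); apply; exact: oV.
  have Vrg : (r @^-1` V k) gam by rewrite /= rg; exact: Vg.
  have [Wk [oWk Wks HWk]] := s_open_at Hgrp Hsc Hlc Hhd Hhaar oVr Vrg.
  by exists Wk => _; split => //; rewrite -sg.
have [Wf HWf] := choice HWk.
exists (interior [set y | forall k, (k < n)%N -> Wf k y]); split.
- exact: open_interior.
- rewrite /interior /=; apply: nbhs_finI => k kn.
  by have [oW Wu _] := HWf k kn; apply: open_nbhs_nbhs.
move=> w G0w /interior_subset /= Ww.
have Heta : forall k, exists y, (k < n)%N -> V k (r y) /\ s y = w.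
  move=> k; have [kn|nk] := ltnP k n; last by exists w.
  have [_ _ H] := HWf k kn.
  by have [y Hy] := H w G0w (Ww k kn); exists y.
have [eta Heta'] := choice Heta.
exists (fun k => r (eta k)); split.
  move=> i j; rewrite !inE /= => ilt jlt e.
  apply/eqP; apply: contraT => ij.
  have [Vi _] := Heta' i ilt; have [Vj _] := Heta' j jlt.
  have Si : S i j (r (eta i)).
    move/interior_subset: Vi => [_ /(_ j jlt)].
    by rewrite (negbTE (_ : j != i)) // eq_sym.
  have Sj : S j i (r (eta j)).
    move/interior_subset: Vj => [_ /(_ i ilt)].
    by rewrite (negbTE ij).
  have [_ _ e0] := Sprop i j ilt jlt ij.
  have : (S i j `&` S j i) (r (eta i)) by split => //; rewrite e.
  by rewrite e0.
move=> k kn; have [Vk sk] := Heta' k kn; split.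
  by exists (eta k).
by move/interior_subset: Vk => [].
Qed.
Lemma ge_open (R : realType) (G : ptopologicalType) (G0 : set G)
    (r s : G -> G) (mul : G -> G -> G) (inv : G -> G)
    (lam : G -> {measure set (g_sigma_algebraType (@open G)) -> \bar R})
    (Hgrp : is_topological_groupoid G0 r s mul inv)
    (Hsc : @second_countable G) (Hlc : locally_compact_space G)
    (Hhd : @hausdorff_space G)
    (Hhaar : is_haar_system G0 r s mul lam) :
  forall n, rel_open G0 (units_ge G0 r s n).
Proof.
move=> n; apply: rel_open_local => [u []//|u [G0u Iu]].
have [g [gi gA]] := (leIn _ _).1 Iu.
have [W [oW Wu HW]] := spread Hgrp Hsc Hlc Hhd Hhaar (u := u) openT gi
  (fun k kn => conj (gA k kn) I).
exists W; split => // w [Ww G0w]; split => //.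
have [h [hi hA]] := HW w G0w Ww.
by apply/leIn; exists h; split => // k kn; exact: (hA k kn).1.
Qed.
Lemma le_closed (R : realType) (G : ptopologicalType) (G0 : set G)
    (r s : G -> G) (mul : G -> G -> G) (inv : G -> G)
    (lam : G -> {measure set (g_sigma_algebraType (@open G)) -> \bar R})
    (Hgrp : is_topological_groupoid G0 r s mul inv)
    (Hsc : @second_countable G) (Hlc : locally_compact_space G)
    (Hhd : @hausdorff_space G)
    (Hhaar : is_haar_system G0 r s mul lam) :
  forall n, rel_closed G0 (units_le G0 r s n).
Proof.
move=> n; have [_ [Og [oO eO]]] := ge_open Hgrp Hsc Hlc Hhd Hhaar (n.+1).
split; first by move=> u [].
exists (~` Og); split; first exact: open_closedC.
apply/seteqP; split.
  move=> u [G0u hle]; split => // Ou.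
  have : units_ge G0 r s n.+1 u by rewrite eO.
  by move=> [_ hge]; move/notle: hle; apply.
move=> u [nOu G0u]; split => //; apply/notle => hge.
by apply: nOu; have : units_ge G0 r s n.+1 u by []; rewrite eO => -[].
Qed.
Lemma eq_geI (G : ptopologicalType) (G0 : set G) (r s : G -> G) n :
  units_eq G0 r s n = units_ge G0 r s n `&` units_le G0 r s n.
Proof.
apply/seteqP; split.
  by move=> u [G0u /card_eqPle [h1 h2]]; split.
by move=> u [[G0u h2] [_ h1]]; split => //; apply/card_eqPle.
Qed.
Lemma eq_lc (R : realType) (G : ptopologicalType) (G0 : set G)
    (r s : G -> G) (mul : G -> G -> G) (inv : G -> G)
    (lam : G -> {measure set (g_sigma_algebraType (@open G)) -> \bar R})
    (Hgrp : is_topological_groupoid G0 r s mul inv)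
    (Hsc : @second_countable G) (Hlc : locally_compact_space G)
    (Hhd : @hausdorff_space G)
    (Hhaar : is_haar_system G0 r s mul lam) :
  forall n, rel_locally_compact (units_eq G0 r s n).
Proof.
move=> n u Au.
have [_ [Og [oO eO]]] := ge_open Hgrp Hsc Hlc Hhd Hhaar n.
have [_ [Cg [cC eC]]] := le_closed Hgrp Hsc Hlc Hhd Hhaar n.
have cG0 := G0_closed Hgrp Hhd.
have [K [cK nK]] := Hlc u.
have Au' := Au; rewrite eq_geI in Au'; case: Au' => geu leu.
have Ou : Og u by move: geu; rewrite eO => -[].
have nN : nbhs u (K `&` Og).
  by apply: filterI => //; apply: open_nbhs_nbhs.
have [M nM cMN] := compact_regular Hhd cK nK nN.
exists (closure M `&` Cg `&` G0); split.
- apply: (subclosed_compact _ cK).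
    by apply: closedI; [apply: closedI => //; exact: closed_closure|].
  by move=> x [[/cMN [] ]].
- move=> x [[/cMN [_ Ox] Cx] G0x]; rewrite eq_geI; split.
    by rewrite eO.
  by rewrite eC.
- exists M°; split => //; first exact: open_interior.
  move=> x [/interior_subset Mx Ax]; rewrite eq_geI in Ax.
  case: Ax => _ lex; move: lex; rewrite eC => -[Cx G0x].
  by split => //; split => //; exact: subset_closure.
Qed.
Lemma sat_pre (G : ptopologicalType) (G0 : set G) r s mul inv (P : set G -> Prop) :
  is_groupoid G0 r s mul inv ->
  G0 `&` (g_orbit r s @^-1` (g_orbit r s @` [set u | G0 u /\ P (g_orbit r s u)]))
  = [set u | G0 u /\ P (g_orbit r s u)].
Proof.
move=> Hg; apply/seteqP; split.
  by move=> z [G0z [w [G0w Pw] /= e]]; split => //; rewrite -e.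
by move=> z [G0z Pz]; split => //; exists z.
Qed.
Lemma sat_preC (G : ptopologicalType) (G0 : set G) r s mul inv (P : set G -> Prop) :
  is_groupoid G0 r s mul inv ->
  G0 `&` (g_orbit r s @^-1` (orbit_space G0 r s `\`
      g_orbit r s @` [set u | G0 u /\ P (g_orbit r s u)]))
  = [set u | G0 u /\ ~ P (g_orbit r s u)].
Proof.
move=> Hg; apply/seteqP; split.
  by move=> z [G0z [_ /= nP]]; split => // Pz; apply: nP; exists z.
move=> z [G0z nPz]; split => //; split; first by exists z.
by move=> [w [G0w Pw] e]; apply: nPz; rewrite -e.
Qed.
Lemma fin_sep (G : ptopologicalType) : hausdorff_space G ->
  forall n m (g g' : nat -> G),
  (forall i j, (i < n)%N -> (j < m)%N -> g i <> g' j) ->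
  exists U U' : set G, [/\ open U, open U', (forall i, (i < n)%N -> U (g i)),
     (forall j, (j < m)%N -> U' (g' j)) & U `&` U' = set0].
Proof.
move=> Hh n m g g' gg.
have [sep Hsep] := pair_sep Hh.
pose P i := interior [set y | forall j, (j < m)%N -> (sep (g i) (g' j)).1 y].
pose Q j := interior [set y | forall i, (i < n)%N -> (sep (g i) (g' j)).2 y].
exists (\bigcup_(i in `I_n) P i), (\bigcup_(j in `I_m) Q j); split.
- by apply: bigcup_open => i _; exact: open_interior.
- by apply: bigcup_open => i _; exact: open_interior.
- move=> i ilt; exists i => //; rewrite /P /interior /=.
  apply: nbhs_finI => j jlt; have [Ho1 _ Hx1 _ _] := Hsep _ _ (gg i j ilt jlt).
  by apply: open_nbhs_nbhs.
- move=> j jlt; exists j => //; rewrite /Q /interior /=.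
  apply: nbhs_finI => i ilt; have [_ Ho2 _ Hx2 _] := Hsep _ _ (gg i j ilt jlt).
  by apply: open_nbhs_nbhs.
apply/seteqP; split; last exact: sub0set.
move=> y [[i ilt /interior_subset Pi] [j jlt /interior_subset Qj]].
have [_ _ _ _ e] := Hsep _ _ (gg i j ilt jlt).
have : ((sep (g i) (g' j)).1 `&` (sep (g i) (g' j)).2) y.
  by split; [apply: Pi | apply: Qj].
by rewrite e.
Qed.
Lemma q_lc (R : realType) (G : ptopologicalType) (G0 : set G)
    (r s : G -> G) (mul : G -> G -> G) (inv : G -> G)
    (lam : G -> {measure set (g_sigma_algebraType (@open G)) -> \bar R})
    (Hgrp : is_topological_groupoid G0 r s mul inv)
    (Hsc : @second_countable G) (Hlc : locally_compact_space G)
    (Hhd : @hausdorff_space G)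
    (Hhaar : is_haar_system G0 r s mul lam) :
  forall n, q_locally_closed G0 r s (g_orbit r s @` units_eq G0 r s n).
Proof.
move=> n; have [Hg _ _] := Hgrp.
exists (g_orbit r s @` units_ge G0 r s n), (g_orbit r s @` units_le G0 r s n).
split; [|split].
- split; first by move=> _ [u [G0u _] <-]; exists u.
  rewrite (sat_pre (fun o => `I_n #<= o) Hg).
  exact: ge_open Hgrp Hsc Hlc Hhd Hhaar n.
- split; first by move=> _ [u [G0u _] <-]; exists u.
  split; first by move=> a [].
  rewrite (sat_preC (fun o => o #<= `I_n) Hg).
  have -> : [set u | G0 u /\ ~ (g_orbit r s u #<= `I_n)] = units_ge G0 r s n.+1.
    apply/seteqP; split => u [G0u H]; split => //.
      by apply: contrapT => nI; apply: H; apply/notle.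
    by move=> /notle; apply.
  exact: ge_open Hgrp Hsc Hlc Hhd Hhaar (n.+1).
- apply/seteqP; split.
    by move=> _ [u Hu <-]; move: Hu; rewrite eq_geI => -[hge hle]; split; exists u.
  move=> _ [[w1 [G0w1 h1] <-] [w2 [G0w2 h2] e]].
  exists w1 => //; rewrite eq_geI; split; split => //.
  by rewrite -e.
Qed.
Lemma sat_open (R : realType) (G : ptopologicalType) (G0 : set G)
    (r s : G -> G) (mul : G -> G -> G) (inv : G -> G)
    (lam : G -> {measure set (g_sigma_algebraType (@open G)) -> \bar R})
    (Hgrp : is_topological_groupoid G0 r s mul inv)
    (Hsc : @second_countable G) (Hlc : locally_compact_space G)
    (Hhd : @hausdorff_space G)
    (Hhaar : is_haar_system G0 r s mul lam) :
  forall W : set G, open W ->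
  q_open G0 r s (g_orbit r s @` (W `&` G0)).
Proof.
move=> W oW; have [Hg _ _] := Hgrp.
have [H1 H2 H3 H4 [H5 H6]] := Hg.
split; first by move=> _ [u [_ G0u] <-]; exists u.
apply: rel_open_local; first by move=> z [].
move=> z [G0z [w [Ww G0w] e]].
have : g_orbit r s w z by rewrite e; exact: (orbit_self Hg).
move=> [gam /= sg rg].
have oS : open (s @^-1` W) by move/continuousP: (s_cont Hgrp); apply.
have Sg : (s @^-1` W) gam by rewrite /= sg.
have [W2 [oW2 W2z HW2]] := r_open_at Hgrp Hsc Hlc Hhd Hhaar oS Sg.
exists W2; split => //; first by rewrite -rg.
move=> z' [W2z' G0z']; split => //.
have [d [Sd rd]] := HW2 z' G0z' W2z'.
exists (s d); first by split => //; case: (H1 d).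
by rewrite -rd /= (orbit_rs Hg).
Qed.
Lemma q_haus (R : realType) (G : ptopologicalType) (G0 : set G)
    (r s : G -> G) (mul : G -> G -> G) (inv : G -> G)
    (lam : G -> {measure set (g_sigma_algebraType (@open G)) -> \bar R})
    (Hgrp : is_topological_groupoid G0 r s mul inv)
    (Hsc : @second_countable G) (Hlc : locally_compact_space G)
    (Hhd : @hausdorff_space G)
    (Hhaar : is_haar_system G0 r s mul lam) :
  forall n, q_rel_hausdorff G0 r s (g_orbit r s @` units_eq G0 r s n).
Proof.
move=> n _ _ [u Au <-] [v Av <-] uv.
have [Hg _ _] := Hgrp.
have Au' := Au; have Av' := Av.
rewrite eq_geI in Au'; rewrite eq_geI in Av'.
case: Au' => [[G0u geu] [_ leu]]; case: Av' => [[G0v gev] [_ lev]].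
have [g [gi gA]] := (leIn _ _).1 geu.
have [g' [gi' gA']] := (leIn _ _).1 gev.
have gg : forall i j, (i < n)%N -> (j < n)%N -> g i <> g' j.
  move=> i j ilt jlt e; apply: uv.
  have o1 := orbit_eq Hg (gA i ilt).
  have o2 := orbit_eq Hg (gA' j jlt).
  by rewrite -o1 -o2 e.
have [U [U' [oU oU' Ug Ug' UU']]] := fin_sep Hhd gg.
have [W [oW Wu HW]] := spread Hgrp Hsc Hlc Hhd Hhaar oU gi
  (fun k kn => conj (gA k kn) (Ug k kn)).
have [W' [oW' Wv HW']] := spread Hgrp Hsc Hlc Hhd Hhaar oU' gi'
  (fun k kn => conj (gA' k kn) (Ug' k kn)).
have sub : forall (X : set G) (Wx : set G),
   (forall w, G0 w -> Wx w -> exists h : nat -> G, {in `I_n &, injective h} /\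
      (forall k, (k < n)%N -> g_orbit r s w (h k) /\ X (h k))) ->
   forall w, Wx w -> G0 w -> units_eq G0 r s n w -> g_orbit r s w `<=` X.
  move=> X Wx HX w Wxw G0w Aw.
  have [h [hi hX]] := HX w G0w Wxw.
  rewrite eq_geI in Aw; case: Aw => _ [_ lew].
  exact: fill lew hi hX.
exists (g_orbit r s @` (W `&` G0)), (g_orbit r s @` (W' `&` G0)); split.
- exact (sat_open Hgrp Hsc Hlc Hhd Hhaar oW).
- exact (sat_open Hgrp Hsc Hlc Hhd Hhaar oW').
- by exists u.
- by exists v.
apply/seteqP; split; last exact: sub0set.
move=> _ [[[w1 [Ww1 G0w1] <-] [w2 [Ww2 G0w2] e12]] [z Az ez]].
have Aw1 : units_eq G0 r s n w1 by move: Az => [G0z Hz]; split => //; rewrite -ez.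
have Aw2 : units_eq G0 r s n w2 by move: Az => [G0z Hz]; split => //; rewrite e12 -ez.
have s1 := sub U W HW w1 Ww1 G0w1 Aw1.
have s2 := sub U' W' HW' w2 Ww2 G0w2 Aw2.
have w1o : g_orbit r s w1 w1 by exact: (orbit_self Hg).
have : (U `&` U') w1 by split; [exact: s1 | apply: s2; rewrite e12].
by rewrite UU'.
Qed.

Unset Implicit Arguments.

Theorem proposition4p6 (R : realType) (G : ptopologicalType) (G0 : set G)
    (r s : G -> G) (mul : G -> G -> G) (inv : G -> G)
    (lam : G -> {measure set (g_sigma_algebraType (@open G)) -> \bar R})
    (Hgrp : is_topological_groupoid G0 r s mul inv)
    (Hsc : @second_countable G) (Hlc : locally_compact_space G)
    (Hhd : @hausdorff_space G)
    (Hhaar : is_haar_system G0 r s mul lam) :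
  (forall n : nat,
      rel_closed G0 (units_le G0 r s n) /\ g_invariant r s (units_le G0 r s n)) /\
  (forall n : nat,
      rel_open G0 (units_ge G0 r s n) /\ g_invariant r s (units_ge G0 r s n)) /\
  (forall n : nat, (1 <= n)%N ->
      [/\ g_invariant r s (units_eq G0 r s n),
          rel_locally_closed G0 (units_eq G0 r s n) &
          rel_locally_compact (units_eq G0 r s n)]) /\
  (forall n : nat, (1 <= n)%N ->
      q_locally_closed G0 r s (g_orbit r s @` units_eq G0 r s n) /\
      q_rel_hausdorff G0 r s (g_orbit r s @` units_eq G0 r s n)).
Proof.
have [Hg _ _] := Hgrp.
split; [|split; [|split]].
- move=> n; split; first exact: (le_closed Hgrp Hsc Hlc Hhd Hhaar n).
  exact: (invariantP (fun o => o #<= `I_n) Hg).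
- move=> n; split; first exact: (ge_open Hgrp Hsc Hlc Hhd Hhaar n).
  exact: (invariantP (fun o => `I_n #<= o) Hg).
- move=> n _; split.
  + exact: (invariantP (fun o => o #= `I_n) Hg).
  + exists (units_ge G0 r s n), (units_le G0 r s n); split.
      exact: (ge_open Hgrp Hsc Hlc Hhd Hhaar n).
    split; first exact: (le_closed Hgrp Hsc Hlc Hhd Hhaar n).
    exact: eq_geI.
  + exact: (@eq_lc R G G0 r s mul inv lam Hgrp Hsc Hlc Hhd Hhaar n).
- move=> n _; split; first exact: (q_lc Hgrp Hsc Hlc Hhd Hhaar n).
  exact: (@q_haus R G G0 r s mul inv lam Hgrp Hsc Hlc Hhd Hhaar n).
Qed.
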